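(* Let $r\ge 2$ be an integer, $\overline{x}\in\mathbb{R}^n$, let $f:\mathbb{R}^n\to\mathbb{R}$ be of class $C^r$ on an open neighbourhood $V$ of $\overline{x}$, and set $\Sigma:=\{x\in V\mid\nabla f(x)=0\}$. Let $c,\delta,\overline{w}>0$ satisfy $$\|\nabla f(x)\|\ge c\,\mathrm{dist}(x,\Sigma)^{r-1}\quad\text{for all }x\in\mathcal{H}_r^{\Sigma}(f,\overline{x};\overline{w})\cap\mathbb{B}_\delta(\overline{x}).$$ If $f$ has a local minimum at $\overline{x}$, then there exists $\epsilon>0$ such that for every function $h:\mathbb{R}^n\to\mathbb{R}$ for which there is $\rho>0$ with $|h(x)-h(\overline{x})|\le\epsilon\,\|\nabla f(x)\|^r$ for all $x\in\mathbb{B}_\rho(\overline{x})$, the function $f+h$ has a local minimum at $\overline{x}$.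
   Context: $\mathbb{B}_\delta(x)$ denotes the closed Euclidean ball of radius $\delta$ centered at $x$, and $\mathrm{dist}(x,\Sigma)=\inf_{y\in\Sigma}\|x-y\|$. The horn-neighbourhood of degree $r$ and width $\overline{w}>0$ is $\mathcal{H}_r^{\Sigma}(f,\overline{x};\overline{w}):=\{x\in\mathbb{R}^n\mid |f(x)-f(\overline{x})|\le\overline{w}\,\mathrm{dist}(x,\Sigma)^r\}$. *)

(* Defs.v *)
From HB Require Import structures.
From mathcomp Require Import all_boot all_order all_algebra.
From mathcomp Require Import all_classical all_reals all_analysis.
Set Implicit Arguments. Unset Strict Implicit. Unset Printing Implicit Defensive.
Import Order.TTheory GRing.Theory Num.Theory.
Import numFieldNormedType.Exports.
Local Open Scope classical_set_scope.
Local Open Scope ring_scope.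

Section Defs.
Variables (R : realType) (n : nat).

Definition enorm (x : 'rV[R]_n) : R := Num.sqrt (\sum_(i < n) x ord0 i ^+ 2).

Definition evec (i : 'I_n) : 'rV[R]_n := delta_mx ord0 i.

Definition partial (i : 'I_n) (g : 'rV[R]_n -> R) : 'rV[R]_n -> R :=
  fun x => 'D_(evec i) g x.

Fixpoint iter_partial (s : seq 'I_n) (g : 'rV[R]_n -> R) : 'rV[R]_n -> R :=
  match s with
  | [::] => g
  | i :: s' => partial i (iter_partial s' g)
  end.

Definition Cr_on (r : nat) (V : set 'rV[R]_n) (f : 'rV[R]_n -> R) : Prop :=
  (forall s : seq 'I_n, (size s < r)%N -> forall i : 'I_n, forall x, V x ->
     derivable (iter_partial s f) x (evec i)) /\
  (forall s : seq 'I_n, (size s <= r)%N -> forall x, V x ->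
     {for x, continuous (iter_partial s f)}).

Definition grad (f : 'rV[R]_n -> R) (x : 'rV[R]_n) : 'rV[R]_n :=
  \row_(i < n) partial i f x.

Definition cball (x : 'rV[R]_n) (d : R) : set 'rV[R]_n :=
  [set y | enorm (y - x) <= d].

Definition dist_to (x : 'rV[R]_n) (S : set 'rV[R]_n) : R :=
  inf [set enorm (x - y) | y in S].

Definition horn_nbhd (r : nat) (S : set 'rV[R]_n) (f : 'rV[R]_n -> R)
    (xbar : 'rV[R]_n) (w : R) : set 'rV[R]_n :=
  [set x | `|f x - f xbar| <= w * dist_to x S ^+ r].

Definition local_min (f : 'rV[R]_n -> R) (xbar : 'rV[R]_n) : Prop :=
  exists2 rho : R, 0 < rho & forall x, enorm (x - xbar) <= rho -> f xbar <= f x.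

End Defs.

(* Main.v *)
Require Import Defs.
From HB Require Import structures.
From mathcomp Require Import all_boot all_order all_algebra.
From mathcomp Require Import all_classical all_reals all_analysis.
From mathcomp Require Import ring lra.
Import Order.TTheory GRing.Theory Num.Theory.
Import numFieldNormedType.Exports.
Local Open Scope classical_set_scope.
Local Open Scope ring_scope.
Lemma slice (R : realType) n (f : 'rV[R]_n -> R) x v s :
  derivable f (x + s *: v) v ->
  is_derive s 1 (fun t => f (x + t *: v)) ('D_v f (x + s *: v)).
Proof.
move=> d.
have E : (fun h : R => h^-1 *: (((fun t => f (x + t *: v)) \o shift s) (h *: 1) - f (x + s *: v)))
  = (fun h => h^-1 *: ((f \o shift (x + s *: v)) (h *: v) - f (x + s *: v))).
  apply/funext => h /=; congr (_ *: (f _ - _)).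
  by rewrite -[h%:A]/(h * 1) mulr1 scalerDl addrCA.
split; rewrite /derivable /derive E //.
Qed.

Lemma mvt_help (R : realType) (g dg : R -> R) (b c : R) : b <= c ->
  (forall s : R, b <= s <= c -> is_derive s 1 g (dg s)) ->
  exists2 xi, b <= xi <= c & g c - g b = dg xi * (c - b).
Proof.
move=> bc D.
have C : {within `[b, c], continuous g}.
  apply: derivable_within_continuous => s; rewrite in_itv /= => hs.
  by have [] := D s hs.
have [xi hxi E] := @MVT_segment R g dg b c bc
   (fun s hs => D s (ltac:(move: hs; rewrite in_itv /= => /andP[h1 h2]; rewrite !ltW //))) C.
by exists xi => //; move: hxi; rewrite in_itv.
Qed.

Lemma absle1 (R : realType) (s a : R) : 0 <= s <= a -> `|s| <= `|a|.
Proof. by case/andP=> h1 h2; rewrite !ger0_norm //; exact: le_trans h2. Qed.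
Lemma absle2 (R : realType) (s a : R) : a <= s <= 0 -> `|s| <= `|a|.
Proof. by case/andP=> h1 h2; rewrite !ler0_norm ?lerN2 //; exact: le_trans h2. Qed.

Lemma taylor1 (R : realType) (p p1 p2 : R -> R) (M a : R) : 0 <= M ->
  (forall s : R, `|s| <= `|a| ->
     [/\ is_derive s 1 p (p1 s), is_derive s 1 p1 (p2 s) & `|p2 s| <= M]) ->
  p a <= p 0 + a * p1 0 + M * a ^+ 2.
Proof.
move=> M0 H.
have D1 : forall s : R, `|s| <= `|a| -> is_derive s 1 p (p1 s) by move=> s /H[].
have D2 : forall s : R, `|s| <= `|a| -> is_derive s 1 p1 (p2 s) by move=> s /H[].
have B : forall s : R, `|s| <= `|a| -> p2 s <= M.
  by move=> s /H[_ _ h]; apply: le_trans h; apply: ler_norm.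
case: (leP 0 a) => a0.
- have [xi /andP[x0 xa] E1] := @mvt_help R p p1 0 a a0
    (fun s hs => D1 s (@absle1 R s a hs)).
  have [eta /andP[e0 ex] E2] := @mvt_help R p1 p2 0 xi x0
    (fun s hs => D2 s (@absle1 R s a (ltac:(case/andP: hs => h1 h2; rewrite h1 /=; exact: le_trans h2 xa)))).
  have hb := B eta (@absle1 R eta a (ltac:(rewrite e0 /=; exact: le_trans ex xa))).
  move: E1 E2; rewrite !subr0 => E1 E2.
  have E3 : p1 xi = p1 0 + p2 eta * xi by lra.
  rewrite E3 in E1.
  have h1 : 0 <= a * xi * (M - p2 eta) by rewrite !mulr_ge0 // subr_ge0.
  have h2 : 0 <= a * (a - xi) * M by rewrite !mulr_ge0 // subr_ge0.
  nra.
- have [xi /andP[ax x0] E1] := @mvt_help R p p1 a 0 (ltW a0)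
    (fun s hs => D1 s (@absle2 R s a hs)).
  have [eta /andP[xe e0] E2] := @mvt_help R p1 p2 xi 0 x0
    (fun s hs => D2 s (@absle2 R s a (ltac:(case/andP: hs => h1 h2; rewrite h2 andbT; exact: le_trans ax h1)))).
  have hb := B eta (@absle2 R eta a (ltac:(rewrite e0 andbT; exact: le_trans ax xe))).
  move: E1 E2; rewrite !sub0r => E1 E2.
  have E3 : p1 xi = p1 0 + p2 eta * xi by lra.
  rewrite E3 in E1.
  have h1 : 0 <= (- a) * (- xi) * (M - p2 eta) by rewrite !mulr_ge0 // ?subr_ge0 ?oppr_ge0 // ltW.
  have h2 : 0 <= (- a) * (xi - a) * M by rewrite !mulr_ge0 // ?subr_ge0 ?oppr_ge0 // ltW.
  nra.
Qed.

Lemma coord_bound (R : realType) n (f : 'rV[R]_n -> R) (i : 'I_n) x (fmin M : R) :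
  0 < M ->
  (forall s : R, `|s| <= `|partial i f x / (2 * M)| ->
    [/\ derivable f (x + s *: evec R i) (evec R i),
        derivable (partial i f) (x + s *: evec R i) (evec R i),
        `|partial i (partial i f) (x + s *: evec R i)| <= M &
        fmin <= f (x + s *: evec R i)]) ->
  partial i f x ^+ 2 <= 4 * M * (f x - fmin).
Proof.
move=> M0 H.
set g := partial i f x.
set a := - (g / (2 * M)).
have Ha : `|a| = `|g / (2 * M)| by rewrite normrN.
have T := @taylor1 R (fun t => f (x + t *: evec R i)) (fun t => partial i f (x + t *: evec R i))
  (fun t => partial i (partial i f) (x + t *: evec R i)) M a (ltW M0).
have T1 : forall s : R, `|s| <= `|a| ->
     [/\ is_derive s 1 (fun t : R => f (x + t *: evec R i))
           (partial i f (x + s *: evec R i)),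
         is_derive s 1 (fun t : R => partial i f (x + t *: evec R i))
           (partial i (partial i f) (x + s *: evec R i))
       & `|partial i (partial i f) (x + s *: evec R i)| <= M].
  move=> s; rewrite Ha => /H [d1 d2 b _].
  split; last exact: b.
  exact: (@slice R n f x (evec R i) s d1).
  exact: (@slice R n (partial i f) x (evec R i) s d2).
have {T T1} Tl := T T1.
have ha : `|a| <= `|partial i f x / (2 * M)| by rewrite Ha.
have [_ _ _ fm] := H a ha.
move: Tl; rewrite !scale0r !addr0 -/g => Tl.
move: (f (x + a *: evec R i)) Tl fm => y Tl fm.
move: (f x) Tl => fx Tl.
clear H ha Ha.
have E : a * g + M * a ^+ 2 = - (g ^+ 2 / (4 * M)).
  by rewrite /a; field; rewrite gt_eqF.

have h4 : g ^+ 2 / (4 * M) <= fx - fmin by lra.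
by rewrite ler_pdivrMr ?mulr_gt0 // mulrC in h4.
Qed.

Lemma coord_le_enorm (R : realType) n (v : 'rV[R]_n) j : `|v ord0 j| <= enorm v.
Proof.
rewrite -sqrtr_sqr /enorm ler_wsqrtr // (bigD1 j) //= lerDl.
by apply: sumr_ge0 => k _; exact: sqr_ge0.
Qed.

Lemma enorm_le_coord (R : realType) n (v : 'rV[R]_n) (c : R) : 0 <= c ->
  (forall j, `|v ord0 j| <= c) -> enorm v <= (n.+1)%:R * c.
Proof.
move=> c0 H.
rewrite -[X in _ <= X]ger0_norm ?mulr_ge0 // -sqrtr_sqr /enorm ler_wsqrtr //.
apply: (@le_trans _ _ (\sum_(k < n) c ^+ 2)).
  apply: ler_sum => k _; rewrite -real_normK ?num_real //.
  have := H k; have := normr_ge0 (v ord0 k); nra.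
rewrite sumr_const card_ord -mulr_natl.
have : (n%:R : R) <= n.+1%:R by rewrite ler_nat.
have : (0 : R) <= n%:R by [].
nra.
Qed.

Lemma shift_coord (R : realType) n (x y : 'rV[R]_n) i (s : R) j :
  `|(x + s *: evec R i) ord0 j - y ord0 j| <= `|x ord0 j - y ord0 j| + `|s|.
Proof.
rewrite /evec !mxE eqxx /= addrAC.
apply: le_trans (ler_normD _ _) _; rewrite lerD2l normrM.
by case: (j == i); rewrite ?normr1 ?normr0 ?mulr1 ?mulr0.
Qed.

Lemma box_of_near (R : realType) n (xbar : 'rV[R]_n) (P : 'rV[R]_n -> Prop) :
  (\forall y \near xbar, P y) ->
  exists2 e : R, 0 < e & forall y : 'rV[R]_n, (forall j, `|y ord0 j - xbar ord0 j| < e) -> P y.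
Proof.
move=> /nbhs_ballP [e e0 He]; exists e => // y Hy; apply: He.
split => // i j; rewrite (ord1 i) /ball /= distrC; exact: Hy.
Qed.

Lemma cont_bound (R : realType) n (g : 'rV[R]_n -> R) xbar :
  {for xbar, continuous g} -> \forall y \near xbar, `|g y| <= `|g xbar| + 1.
Proof.
move=> /cvgr_dist_lt H; have := H 1 ltr01.
apply: filterS => y hy.
have -> : g y = g xbar + (g y - g xbar) by rewrite addrC subrK.
apply: (le_trans (ler_normD _ _)); rewrite lerD2l distrC; exact: ltW.
Qed.

Arguments coord_le_enorm {R n} v j.
Arguments enorm_le_coord {R n} v c.
Arguments shift_coord {R n} x y i s j.
Arguments coord_bound {R n} f i x fmin M.

Theorem corollary3p9 (R : realType) (n r : nat) (xbar : 'rV[R]_n)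
  (f : 'rV[R]_n -> R) (V : set 'rV[R]_n)
  (hr : (2 <= r)%N) (hV : open V) (hxV : V xbar) (hf : Cr_on r V f)
  (c delta w : R) (hc : 0 < c) (hdelta : 0 < delta) (hw : 0 < w) :
  let Sigma := [set x | V x /\ grad f x = 0] in
  (forall x, horn_nbhd r Sigma f xbar w x -> cball xbar delta x ->
     c * dist_to x Sigma ^+ r.-1 <= enorm (grad f x)) ->
  local_min f xbar ->
  exists2 eps : R, 0 < eps &
    forall h : 'rV[R]_n -> R,
      (exists2 rho : R, 0 < rho & forall x, cball xbar rho x ->
         `|h x - h xbar| <= eps * enorm (grad f x) ^+ r) ->
      local_min (fun x => f x + h x) xbar.
Proof.
move=> Sigma _ [rho0 rho0pos Hmin].
case: hf => hd hcont.
pose C := fun i : 'I_n => (`|partial i f xbar| + 1 : R).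
pose M0 := fun i : 'I_n => (`|partial i (partial i f) xbar| + 1 : R).
have H1 : forall i : 'I_n, \forall y \near xbar,
   [/\ derivable f y (evec R i), derivable (partial i f) y (evec R i),
       `|partial i (partial i f) y| <= M0 i & `|partial i f y| <= C i].
  move=> i.
  have c1 := @cont_bound R n _ xbar (hcont [:: i] (ltac:(by rewrite /=; apply: leq_trans hr)) xbar hxV).
  have c2 := @cont_bound R n _ xbar (hcont [:: i; i] hr xbar hxV).
  have hVn : \forall y \near xbar, V y by exact: (hV xbar hxV).
  near=> y.
  have Vy : V y by near: y.
  split.
  - exact: (hd [::] (ltac:(by apply: leq_trans hr)) i y Vy).
  - exact: (hd [:: i] hr i y Vy).
  - near: y; exact: c2.
  - near: y; exact: c1.
  Unshelve. all: end_near.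
have [e e0 He] := @box_of_near R n xbar _ (filter_forall _ H1).
pose d : R := Num.min (e / 3) (rho0 / (2 * n.+1%:R)).
have n0 : (0 : R) < n.+1%:R by rewrite ltr0Sn.
have d0 : 0 < d by rewrite lt_min !divr_gt0 ?mulr_gt0.
have de : d <= e / 3 by rewrite ge_min lexx.
have dlt : d < e by lra.
have d2lt : 2 * d < e by lra.
have drho' : d <= rho0 / (2 * n.+1%:R) by rewrite ge_min lexx orbT.
have drho : n.+1%:R * (2 * d) <= rho0.
  move: drho'; rewrite ler_pdivlMr ?mulr_gt0 //; nra.
have n1 : (1 : R) <= n.+1%:R by rewrite ler1n.
have drho2 : d <= rho0 by nra.
pose M := fun i : 'I_n => M0 i + C i / d + 1.
have C0 : forall i, 0 <= C i by move=> i; rewrite /C addr_ge0.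
have M00 : forall i, 0 <= M0 i by move=> i; rewrite /M0 addr_ge0.
have Mgt0 : forall i, 0 < M i.
  by move=> i; rewrite /M ltr_wpDl // addr_ge0 // divr_ge0 // ltW.
have key : forall x, enorm (x - xbar) <= d -> forall i,
    partial i f x ^+ 2 <= 4 * M i * (f x - f xbar).
  move=> x hx i.
  have hxj : forall j, `|x ord0 j - xbar ord0 j| <= d.
    move=> j; apply: le_trans hx; have := coord_le_enorm (x - xbar) j.
    by rewrite !mxE.
  have [_ _ _ hCx] := He x (fun j => le_lt_trans (hxj j) dlt) i.
  apply: coord_bound (Mgt0 i) _ => s hs.
  have hs' : `|s| <= d.
    apply: le_trans hs _.
    have h2M : 0 < 2 * M i by rewrite mulr_gt0.
    rewrite normrM normfV (gtr0_norm h2M) ler_pdivrMr //.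
    have E : d * M i = d * M0 i + C i + d by rewrite /M; field; rewrite gt_eqF.
    have := M00 i; nra.
  have hy : forall j, `|(x + s *: evec R i) ord0 j - xbar ord0 j| < e.
    move=> j; apply: le_lt_trans (shift_coord _ _ _ _ _) _.
    apply: le_lt_trans d2lt; rewrite mulr2n mulrDl mul1r; exact: lerD.
  have [d1 d2 b _] := He _ hy i.
  split; [exact: d1 | exact: d2 | | ].
    apply: le_trans b _; rewrite /M; have := C0 i; have : 0 <= C i / d by rewrite divr_ge0 // ltW.
    lra.
  apply: Hmin; apply: le_trans drho.
  apply: enorm_le_coord; first lra.
  move=> j; have := shift_coord x xbar i s j; rewrite !mxE => h.
  apply: le_trans h _; have h2 := hxj j.
  rewrite mulr2n mulrDl mul1r; exact: lerD.
pose K : R := \sum_(i < n) 4 * M i.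
have K0 : 0 <= K by apply: sumr_ge0 => i _; rewrite mulr_ge0 // ltW.
pose B : R := Num.sqrt (\sum_(i < n) C i ^+ 2).
have B0 : 0 <= B by apply: sqrtr_ge0.
have gradE : forall x i, grad f x ord0 i = partial i f x by move=> x i; rewrite mxE.
have fge : forall x, enorm (x - xbar) <= d -> f xbar <= f x.
  by move=> x hx; apply: Hmin; apply: le_trans hx drho2.
have Gsq : forall x, enorm (x - xbar) <= d -> enorm (grad f x) ^+ 2 <= K * (f x - f xbar).
  move=> x hx; rewrite /enorm sqr_sqrtr; last by apply: sumr_ge0 => i _; exact: sqr_ge0.
  rewrite /K mulr_suml; apply: ler_sum => i _; rewrite gradE; exact: key.
have Gb : forall x, enorm (x - xbar) <= d -> enorm (grad f x) <= B.
  move=> x hx; rewrite /enorm /B ler_wsqrtr //; apply: ler_sum => i _; rewrite gradE.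
  have hxj : forall j, `|x ord0 j - xbar ord0 j| < e.
    move=> j; apply: le_lt_trans dlt; apply: le_trans hx; have := coord_le_enorm (x - xbar) j.
    by rewrite !mxE.
  have [_ _ _ hC] := He x hxj i.
  rewrite -real_normK ?num_real //; have := normr_ge0 (partial i f x); nra.
pose P : R := B ^+ (r - 2).
have P0 : 0 <= P by rewrite exprn_ge0.
pose eps : R := (K * P + 1)^-1.
have KP1 : 0 < K * P + 1 by rewrite ltr_pwDr // mulr_ge0.
have eps0 : 0 < eps by rewrite invr_gt0.
have epsE : eps * (K * P + 1) = 1 by rewrite mulVf // gt_eqF.
exists eps => // h [rhoh rhoh0 Hh].
exists (Num.min rhoh d); first by rewrite lt_min rhoh0 d0.
move=> x; rewrite le_min => /andP[hx1 hx2].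
have Hx := Hh x hx1.
have fx := fge x hx2.
have S1 := Gsq x hx2.
have Q1 : enorm (grad f x) ^+ (r - 2) <= P.
  by rewrite /P lerXn2r // ?nnegrE //; [exact: sqrtr_ge0 | exact: Gb].
have Q0 : 0 <= enorm (grad f x) ^+ (r - 2) by rewrite exprn_ge0 // sqrtr_ge0.
have S0 : 0 <= enorm (grad f x) ^+ 2 by rewrite exprn_ge0 // sqrtr_ge0.
move: Hx; rewrite -(subnKC hr) exprD.
move: (enorm (grad f x) ^+ 2) (enorm (grad f x) ^+ (r - 2)) S1 Q1 Q0 S0 => S Q S1 Q1 Q0 S0.
move: (f x) (f xbar) fx S1 => fx1 fx0 fx S1.
have T1 : S * Q <= K * (fx1 - fx0) * P by apply: ler_pM.
have T2 : eps * (S * Q) <= eps * (K * (fx1 - fx0) * P) by rewrite ler_pM2l.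
have T3 : eps * (K * (fx1 - fx0) * P) <= fx1 - fx0.
  have -> : eps * (K * (fx1 - fx0) * P) = (fx1 - fx0) * (1 - eps) by rewrite -epsE; ring.
  rewrite ler_piMr ?subr_ge0 // lerBlDr lerDl; exact: ltW.
move=> Hh2.
have := le_trans Hh2 (le_trans T2 T3); rewrite ler_norml => /andP[l1 l2].
lra.
Qed.
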